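(* Let $A$ be an infinitesimal Hopf algebra with counit $\varepsilon$ and antipode $S$, and let $\mathrm{Prim}(A)=\{x\in A:\Delta(x)=x\otimes 1+1\otimes x\}$. Then $\mathrm{Ker}(\varepsilon)=\mathrm{Prim}(A)\oplus \mathrm{Ker}(\varepsilon)^2$, and the projection of $\mathrm{Ker}(\varepsilon)$ onto $\mathrm{Prim}(A)$ along $\mathrm{Ker}(\varepsilon)^2$ in this direct sum is (the restriction of) $-S$.
   Context: An infinitesimal bialgebra over a field $K$ is a $K$-vector space $A$ that is an associative unital algebra (product $m$, unit $1$) and a coassociative counital coalgebra (coproduct $\Delta$, counit $\varepsilon$) such that for all $a,b\in A$: $\Delta(ab)=\Delta(a)(1\otimes b)+(a\otimes 1)\Delta(b)-a\otimes b$. On the space $\mathcal{L}(A)$ of linear endomorphisms of $A$, the convolution product is $f\star g=m\circ(f\otimes g)\circ\Delta$, with unit $\nu\circ\varepsilon$, where $\nu(\lambda)=\lambda 1$. $A$ is an infinitesimal Hopf algebra if $\mathrm{Id}_A$ has an inverse $S$ for $\star$; $S$ is called the antipode. $\mathrm{Ker}(\varepsilon)^2$ denotes the linear span of products $xy$ with $x,y\in\mathrm{Ker}(\varepsilon)$. *)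

(* Defs.v *)
From HB Require Import structures.
From mathcomp Require Import all_boot all_order all_algebra.
Set Implicit Arguments. Unset Strict Implicit. Unset Printing Implicit Defensive.
Import GRing.Theory.
Local Open Scope ring_scope.

(* Elements of A (x) A are represented by finite sums  \sum_i a_i (x) b_i,
   i.e. sequences of pairs; two such representatives denote the same tensor
   iff they agree under every bilinear map into every K-module
   (universal property of the tensor product).  Same for A (x) A (x) A. *)

Section Tensors.
Variables (K : fieldType) (A : algType K).

Definition tens2 := seq (A * A).
Definition tens3 := seq (A * A * A).

Definition bilinear_map (W : lmodType K) (phi : A -> A -> W) : Prop :=
  (forall (k : K) x y b, phi (k *: x + y) b = k *: phi x b + phi y b) /\
  (forall (k : K) a x y, phi a (k *: x + y) = k *: phi a x + phi a y).

Definition trilinear_map (W : lmodType K) (phi : A -> A -> A -> W) : Prop :=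
  (forall (k : K) x y b c, phi (k *: x + y) b c = k *: phi x b c + phi y b c) /\
  (forall (k : K) a x y c, phi a (k *: x + y) c = k *: phi a x c + phi a y c) /\
  (forall (k : K) a b x y, phi a b (k *: x + y) = k *: phi a b x + phi a b y).

Definition teq2 (t u : tens2) : Prop :=
  forall (W : lmodType K) (phi : A -> A -> W), bilinear_map phi ->
    \sum_(p <- t) phi p.1 p.2 = \sum_(p <- u) phi p.1 p.2.

Definition teq3 (t u : tens3) : Prop :=
  forall (W : lmodType K) (phi : A -> A -> A -> W), trilinear_map phi ->
    \sum_(p <- t) phi p.1.1 p.1.2 p.2 = \sum_(p <- u) phi p.1.1 p.1.2 p.2.

Record inf_bialgebra (Delta : A -> tens2) (eps : A -> K) : Prop := {
  eps_linear : forall (k : K) x y, eps (k *: x + y) = k * eps x + eps y;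
  Delta_linear : forall (k : K) x y,
    teq2 (Delta (k *: x + y))
         ([seq (k *: p.1, p.2) | p <- Delta x] ++ Delta y);
  Delta_coassoc : forall x,
    teq3 [seq (q.1, q.2, p.2) | p <- Delta x, q <- Delta p.1]
         [seq (p.1, q.1, q.2) | p <- Delta x, q <- Delta p.2];
  counit_l : forall x, \sum_(p <- Delta x) eps p.1 *: p.2 = x;
  counit_r : forall x, \sum_(p <- Delta x) eps p.2 *: p.1 = x;
  (* Delta(ab) = Delta(a)(1 (x) b) + (a (x) 1)Delta(b) - a (x) b *)
  Delta_inf : forall a b,
    teq2 (Delta (a * b))
         ([seq (p.1, p.2 * b) | p <- Delta a] ++
          [seq (a * p.1, p.2) | p <- Delta b] ++ [:: (- a, b)])
}.

Definition conv (Delta : A -> tens2) (f g : A -> A) : A -> A :=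
  fun x => \sum_(p <- Delta x) f p.1 * g p.2.

Definition conv_unit (eps : A -> K) : A -> A := fun x => eps x *: 1.

Definition linear_endo (f : A -> A) : Prop :=
  forall (k : K) x y, f (k *: x + y) = k *: f x + f y.

Definition is_antipode (Delta : A -> tens2) (eps : A -> K) (S : A -> A) : Prop :=
  linear_endo S /\
  (forall x, conv Delta S id x = conv_unit eps x) /\
  (forall x, conv Delta id S x = conv_unit eps x).

Definition prim (Delta : A -> tens2) (x : A) : Prop :=
  teq2 (Delta x) [:: (x, 1); (1, x)].

Definition ker_sq (eps : A -> K) (z : A) : Prop :=
  exists s : seq (K * A * A),
    (forall t, t \in s -> eps t.1.2 = 0 /\ eps t.2 = 0) /\
    z = \sum_(t <- s) t.1.1 *: (t.1.2 * t.2).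

End Tensors.

(* Main.v *)
Require Import Defs.
From mathcomp Require Import all_boot all_order all_algebra.
Local Open Scope ring_scope.
Import GRing.Theory.

Section Gen.
End Gen.

Lemma linG (K : fieldType) (V W : lmodType K) (f : V -> W) :
  (forall k x y, f (k *: x + y) = k *: f x + f y) ->
  [/\ f 0 = 0, (forall x y, f (x + y) = f x + f y),
      (forall k x, f (k *: x) = k *: f x),
      (forall x, f (- x) = - f x) &
      (forall (I : Type) (s : seq I) (F : I -> V),
          f (\sum_(i <- s) F i) = \sum_(i <- s) f (F i))].
Proof.
move=> Hf.
have f0 : f 0 = 0.
  have h := Hf 1 0 0; rewrite !scale1r addr0 in h.
  by apply: (@addrI _ (f 0)); rewrite addr0 -h.
have fD : forall x y, f (x + y) = f x + f y.
  by move=> x y; have := Hf 1 x y; rewrite !scale1r.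
have fZ : forall k x, f (k *: x) = k *: f x.
  by move=> k x; rewrite -[k *: x]addr0 Hf f0 addr0.
split => //.
- by move=> x; rewrite -scaleN1r fZ scaleN1r.
- move=> I s F; exact: (big_morph f fD f0).
Qed.

Arguments linG {K V W f}.

Section Main.
Variables (K : fieldType) (A : algType K) (Delta : A -> tens2 A) (eps : A -> K) (S : A -> A).
Hypothesis H : inf_bialgebra Delta eps.
Hypothesis HS : is_antipode Delta eps S.

Lemma epsL : forall k (x y : A), (eps (k *: x + y) : K^o) = k *: (eps x : K^o) + eps y.
Proof. exact: (eps_linear H). Qed.

Lemma eps0 : eps 0 = 0. Proof. by case: (linG epsL). Qed.
Lemma epsD x y : eps (x + y) = eps x + eps y. Proof. by case: (linG epsL). Qed.
Lemma epsZ k x : eps (k *: x) = k * eps x. Proof. by case: (linG epsL) => _ _ h _ _; exact: h. Qed.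
Lemma epsN x : eps (- x) = - eps x. Proof. by case: (linG epsL). Qed.
Lemma eps_sum (I : Type) (s : seq I) (F : I -> A) :
  eps (\sum_(i <- s) F i) = \sum_(i <- s) eps (F i).
Proof. by case: (linG epsL) => _ _ _ _ h; exact: h. Qed.

Lemma SL : forall k (x y : A), S (k *: x + y) = k *: S x + S y.
Proof. by case: HS. Qed.
Lemma S0 : S 0 = 0. Proof. by case: (linG SL). Qed.
Lemma SD x y : S (x + y) = S x + S y. Proof. by case: (linG SL). Qed.
Lemma SZ k x : S (k *: x) = k *: S x. Proof. by case: (linG SL). Qed.
Lemma SN x : S (- x) = - S x. Proof. by case: (linG SL). Qed.
Lemma S_sum (I : Type) (s : seq I) (F : I -> A) :
  S (\sum_(i <- s) F i) = \sum_(i <- s) S (F i).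
Proof. by case: (linG SL) => _ _ _ _ h; exact: h. Qed.

Section Bil.
Variables (W : lmodType K) (phi : A -> A -> W).
Hypothesis Hb : bilinear_map phi.
Lemma phiLl b : forall k x y, phi (k *: x + y) b = k *: phi x b + phi y b.
Proof. by move=> k x y; case: Hb => h _; exact: h. Qed.
Lemma phiLr a : forall k x y, phi a (k *: x + y) = k *: phi a x + phi a y.
Proof. by move=> k x y; case: Hb => _ h; exact: h. Qed.
Lemma phi0l b : phi 0 b = 0. Proof. by case: (linG (phiLl b)). Qed.
Lemma phiDl b x y : phi (x + y) b = phi x b + phi y b. Proof. by case: (linG (phiLl b)). Qed.
Lemma phiZl b k x : phi (k *: x) b = k *: phi x b. Proof. by case: (linG (phiLl b)). Qed.
Lemma phiNl b x : phi (- x) b = - phi x b. Proof. by case: (linG (phiLl b)). Qed.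
Lemma phi_suml b (I : Type) (s : seq I) (F : I -> A) :
  phi (\sum_(i <- s) F i) b = \sum_(i <- s) phi (F i) b.
Proof. by case: (linG (phiLl b)) => _ _ _ _ h; exact: h. Qed.
Lemma phi0r b : phi b 0 = 0. Proof. by case: (linG (phiLr b)). Qed.
Lemma phiDr b x y : phi b (x + y) = phi b x + phi b y. Proof. by case: (linG (phiLr b)). Qed.
Lemma phiZr b k x : phi b (k *: x) = k *: phi b x. Proof. by case: (linG (phiLr b)). Qed.
Lemma phiNr b x : phi b (- x) = - phi b x. Proof. by case: (linG (phiLr b)). Qed.
Lemma phi_sumr b (I : Type) (s : seq I) (F : I -> A) :
  phi b (\sum_(i <- s) F i) = \sum_(i <- s) phi b (F i).
Proof. by case: (linG (phiLr b)) => _ _ _ _ h; exact: h. Qed.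

Definition Phi z := \sum_(p <- Delta z) phi p.1 p.2.

Lemma PhiL k x y : Phi (k *: x + y) = k *: Phi x + Phi y.
Proof.
rewrite /Phi (Delta_linear H k x y Hb) big_cat big_map /= scaler_sumr.
by congr (_ + _); apply: eq_bigr => p _; rewrite phiZl.
Qed.

Lemma Phi1 : Phi 1 = phi 1 1.
Proof.
have := Delta_inf H 1 1 Hb; rewrite !big_cat !big_map /= big_seq1 mulr1.
have e1 : \sum_(p <- Delta 1) phi p.1 (p.2 * 1) = Phi 1.
  by apply: eq_bigr => p _; rewrite mulr1.
have e2 : \sum_(p <- Delta 1) phi (1 * p.1) p.2 = Phi 1.
  by apply: eq_bigr => p _; rewrite mul1r.
rewrite e1 e2 phiNl => h.
have : Phi 1 + (Phi 1 - phi 1 1) = Phi 1 + 0 by rewrite -h addr0.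
by move/addrI/eqP; rewrite subr_eq0 => /eqP.
Qed.

Lemma Delta_mul a b : Phi (a * b) =
  \sum_(p <- Delta a) phi p.1 (p.2 * b) +
  \sum_(p <- Delta b) phi (a * p.1) p.2 - phi a b.
Proof.
rewrite /Phi (Delta_inf H a b Hb) !big_cat !big_map /= big_seq1 phiNl.
by rewrite addrA.
Qed.
End Bil.

Lemma bil_el : bilinear_map (fun u v : A => eps u *: v).
Proof.
split=> *; first by rewrite epsL scalerDl scalerA.
by rewrite scalerDr !scalerA mulrC.
Qed.
Lemma bil_er : bilinear_map (fun u v : A => eps v *: u).
Proof.
split=> *; last by rewrite epsL scalerDl scalerA.
by rewrite scalerDr !scalerA mulrC.
Qed.
Lemma bil_ee : bilinear_map (W := K^o) (fun u v : A => eps u * eps v).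
Proof.
split=> k x y *; rewrite (eps_linear H).
  by rewrite mulrDl -mulrA.
by rewrite mulrDr mulrA [eps x * k]mulrC -mulrA.
Qed.
Lemma bil_Sm : bilinear_map (fun u v : A => S u * v).
Proof.
split=> * /=; first by rewrite SL mulrDl scalerAl.
by rewrite mulrDr scalerAr.
Qed.
Lemma bil_mS : bilinear_map (fun u v : A => u * S v).
Proof.
split=> * /=; first by rewrite mulrDl scalerAl.
by rewrite SL mulrDr scalerAr.
Qed.
Lemma bil_lm (W : lmodType K) (phi : A -> A -> W) (c : A) :
  bilinear_map phi -> bilinear_map (fun u v => phi (c * u) v).
Proof.
move=> Hb; split=> * /=; first by rewrite mulrDr -scalerAr phiLl.
by rewrite phiLr.
Qed.


Lemma eps_mul a b : eps (a * b) = eps a * eps b.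
Proof.
have R : \sum_(p <- Delta b) eps (a * p.1) *: p.2 = eps a *: b.
  have h0 : Phi _ (fun u v => eps u *: v) (a * b) = a * b := counit_l H (a * b).
  move: h0; rewrite (Delta_mul _ _ bil_el) /=.
  have -> : \sum_(p <- Delta a) eps p.1 *: (p.2 * b) = a * b.
    rewrite -[in RHS](counit_l H a) mulr_suml.
    by apply: eq_bigr => p _; rewrite scalerAl.
  move=> h; apply/eqP; rewrite -subr_eq0; apply/eqP.
  by apply: (@addrI _ (a * b)); rewrite addr0 addrA.
have L : \sum_(p <- Delta a) eps (p.2 * b) *: p.1 = eps b *: a.
  have h0 : Phi _ (fun u v => eps v *: u) (a * b) = a * b := counit_r H (a * b).
  move: h0; rewrite (Delta_mul _ _ bil_er) /=.
  have -> : \sum_(p <- Delta b) eps p.2 *: (a * p.1) = a * b.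
    rewrite -[in RHS](counit_r H b) mulr_sumr.
    by apply: eq_bigr => p _; rewrite scalerAr.
  move=> h; apply/eqP; rewrite -subr_eq0; apply/eqP.
  by apply: (@addIr _ (a * b)); rewrite add0r -[in RHS]h addrAC.
have E : eps (a * b) = Phi _ (fun u v => (eps u * eps v : K^o)) (a * b).
  rewrite -{1}(counit_l H (a * b)) eps_sum.
  by apply: eq_bigr => p _; rewrite epsZ.
rewrite E (Delta_mul _ _ bil_ee) /=.
have -> : \sum_(p <- Delta a) (eps p.1 * eps (p.2 * b) : K^o) = eps b * eps a.
  rewrite -epsZ -L eps_sum.
  by apply: eq_bigr => p _; rewrite epsZ mulrC.
have -> : \sum_(p <- Delta b) (eps (a * p.1) * eps p.2 : K^o) = eps a * eps b.
  rewrite -epsZ -R eps_sum.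
  by apply: eq_bigr => p _; rewrite epsZ.
by rewrite mulrC addrK.
Qed.


Lemma eps1 x : eps x * eps 1 = eps x.
Proof. by rewrite -eps_mul mulr1. Qed.

Lemma convSid y : \sum_(p <- Delta y) S p.1 * p.2 = eps y *: 1.
Proof. by case: HS => _ [h _]; exact: h. Qed.
Lemma convidS y : \sum_(p <- Delta y) p.1 * S p.2 = eps y *: 1.
Proof. by case: HS => _ [_ h]; exact: h. Qed.

Lemma epsS y : eps (S y) = eps y.
Proof.
have h := congr1 eps (convSid y).
rewrite epsZ eps1 eps_sum in h; rewrite -{}h.
rewrite -{1}(counit_r H y) S_sum eps_sum.
by apply: eq_bigr => p _; rewrite SZ epsZ eps_mul mulrC.
Qed.

Lemma S1 : S 1 = 1.
Proof.
have h1 := Phi1 _ _ bil_Sm; rewrite /Phi convSid /= mulr1 in h1.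
have h2 := Phi1 _ _ bil_el; rewrite /Phi (counit_l H) /= in h2.
by rewrite -h1 -h2.
Qed.

Lemma prim_eps x : prim Delta x -> eps x = 0.
Proof.
move=> Hp; have h := Hp _ _ bil_el.
rewrite (counit_l H) !big_cons big_nil /= addr0 in h.
have h' := congr1 eps h.
rewrite epsD !epsZ eps1 mulrC eps1 in h'.
by apply: (@addrI _ (eps x)); rewrite addr0 -h'.
Qed.

Lemma kersq_eps x : ker_sq eps x -> eps x = 0.
Proof.
case=> s [Hs ->]; rewrite eps_sum big1_seq // => t /andP [_ /Hs [h1 h2]].
by rewrite epsZ eps_mul h1 mul0r mulr0.
Qed.

Lemma S_mul0 a b : eps a = 0 -> eps b = 0 -> S (a * b) = 0.
Proof.
move=> ea eb.
have R : forall c, \sum_(q <- Delta c) S (a * q.1) * q.2 = S a * c.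
  move=> c; have h := convSid (a * c).
  rewrite eps_mul ea mul0r scale0r in h.
  move: h; rewrite -/(Phi _ (fun u v => S u * v) (a * c)) (Delta_mul _ _ bil_Sm) /=.
  have -> : \sum_(p <- Delta a) S p.1 * (p.2 * c) = 0.
    rewrite (eq_bigr (fun p => (S p.1 * p.2) * c)); last by move=> p _; rewrite mulrA.
    by rewrite -mulr_suml convSid ea scale0r mul0r.
  by rewrite add0r => /eqP; rewrite subr_eq0 => /eqP.
have T : trilinear_map (fun u v w => S (a * u) * (v * S w)).
  split; [|split] => k x y *.
  - by rewrite mulrDr -scalerAr SL mulrDl scalerAl.
  - by rewrite mulrDl mulrDr -scalerAl -scalerAr.
  - by rewrite SL mulrDr mulrDr -scalerAr -scalerAr.
have C := Delta_coassoc H b T.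
rewrite !big_allpairs_dep /= in C.
have -> : S (a * b) = \sum_(p <- Delta b) \sum_(q <- Delta p.2)
    S (a * p.1) * (q.1 * S q.2).
  rewrite -{1}(counit_r H b) mulr_sumr S_sum.
  apply: eq_bigr => p _; rewrite -mulr_sumr convidS -scalerAr SZ.
  by rewrite -scalerAr mulr1.
rewrite -C.
rewrite (eq_bigr (fun p => S a * (p.1 * S p.2))).
  by rewrite -mulr_sumr convidS eb scale0r mulr0.
move=> p _; rewrite mulrA -R mulr_suml.
by apply: eq_bigr => q _; rewrite mulrA.
Qed.


Section Bil2.
Variables (W : lmodType K) (phi : A -> A -> W).
Hypothesis Hb : bilinear_map phi.

Lemma PhiD x y : Phi _ phi (x + y) = Phi _ phi x + Phi _ phi y.
Proof. by case: (linG (PhiL _ _ Hb)). Qed.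
Lemma PhiZ k x : Phi _ phi (k *: x) = k *: Phi _ phi x.
Proof. by case: (linG (PhiL _ _ Hb)). Qed.
Lemma PhiN x : Phi _ phi (- x) = - Phi _ phi x.
Proof. by case: (linG (PhiL _ _ Hb)). Qed.
Lemma Phi_sum (I : Type) (s : seq I) (F : I -> A) :
  Phi _ phi (\sum_(i <- s) F i) = \sum_(i <- s) Phi _ phi (F i).
Proof. by case: (linG (PhiL _ _ Hb)) => _ _ _ _ h; exact: h. Qed.

Lemma E1 y :
  phi y 1 + \sum_(p <- Delta y) \sum_(q <- Delta (S p.2)) phi (p.1 * q.1) q.2
  - \sum_(p <- Delta y) phi p.1 (S p.2) = eps y *: phi 1 1.
Proof.
have h := congr1 (Phi _ phi) (convidS y).
rewrite PhiZ (Phi1 _ _ Hb) Phi_sum in h.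
rewrite (eq_bigr (fun p => \sum_(q <- Delta p.1) phi q.1 (q.2 * S p.2) +
   \sum_(q <- Delta (S p.2)) phi (p.1 * q.1) q.2 - phi p.1 (S p.2))) in h;
  last by move=> p _ /=; rewrite (Delta_mul _ _ Hb).
rewrite -{}h sumrB big_split /=; congr (_ - _); congr (_ + _).
have T : trilinear_map (fun u v w => phi u (v * S w)).
  split; [|split] => k x z *.
  - by rewrite (phiLl _ _ Hb).
  - by rewrite mulrDl -scalerAl (phiLr _ _ Hb).
  - by rewrite SL mulrDr -scalerAr (phiLr _ _ Hb).
have C := Delta_coassoc H y T.
rewrite !big_allpairs_dep /= in C.
rewrite C -{1}(counit_r H y) (phi_suml _ _ Hb).
apply: eq_bigr => p _; rewrite -(phi_sumr _ _ Hb) convidS (phiZl _ _ Hb) (phiZr _ _ Hb).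
done.
Qed.
End Bil2.

Lemma aux_eq (W : zmodType) (X D Y Z : W) : X + D - Y = Z -> D = Z - X + Y.
Proof. by move=> <-; rewrite addrAC subrK [X + D]addrC addrK. Qed.

Section Bil3.
Variables (W : lmodType K) (phi : A -> A -> W).
Hypothesis Hb : bilinear_map phi.

Lemma LinC z k c d : Phi _ (fun a b => phi ((k *: c + d) * a) b) z =
  k *: Phi _ (fun a b => phi (c * a) b) z + Phi _ (fun a b => phi (d * a) b) z.
Proof.
rewrite /Phi scaler_sumr -big_split; apply: eq_bigr => r _ /=.
by rewrite mulrDl -scalerAl (phiLl _ _ Hb).
Qed.

Lemma DeltaS x : Phi _ phi (S x) = phi (S x) 1 + phi 1 (S x) - eps x *: phi 1 1.
Proof.
have S1' : Phi _ phi (S x) = \sum_(p <- Delta x) \sum_(q <- Delta p.1)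
    Phi _ (fun a b => phi (S q.1 * q.2 * a) b) (S p.2).
  rewrite -{1}(counit_l H x) S_sum (Phi_sum _ _ Hb); apply: eq_bigr => p _ /=.
  rewrite SZ (PhiZ _ _ Hb) /Phi exchange_big /= scaler_sumr.
  apply: eq_bigr => r _; rewrite -(phi_suml _ _ Hb) -mulr_suml convSid.
  by rewrite -scalerAl mul1r (phiZl _ _ Hb).
have T : trilinear_map (fun u v w => Phi _ (fun a b => phi (S u * v * a) b) (S w)).
  split; [|split] => k y z *.
  - by rewrite SL mulrDl -scalerAl LinC.
  - by rewrite mulrDr -scalerAr LinC.
  - by rewrite SL (PhiL _ _ (bil_lm _ _ (_ * _) Hb)).
have C := Delta_coassoc H x T.
rewrite !big_allpairs_dep /= in C.
rewrite S1' C.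
rewrite (eq_bigr (fun p => eps p.2 *: phi (S p.1) 1 - phi (S p.1 * p.2) 1 +
   \sum_(q <- Delta p.2) phi (S p.1 * q.1) (S q.2))); last first.
  move=> p _; have E := E1 _ _ (bil_lm _ _ (S p.1) Hb) p.2.
  rewrite /= mulr1 in E.
  rewrite -(@aux_eq _ _ _ _ _ E); apply: eq_bigr => q _; rewrite /Phi.
  by apply: eq_bigr => r _; rewrite mulrA.
rewrite big_split sumrB /=.
have -> : \sum_(p <- Delta x) eps p.2 *: phi (S p.1) 1 = phi (S x) 1.
  rewrite -[in RHS](counit_r H x) S_sum (phi_suml _ _ Hb).
  by apply: eq_bigr => p _; rewrite SZ (phiZl _ _ Hb).
have -> : \sum_(p <- Delta x) phi (S p.1 * p.2) 1 = eps x *: phi 1 1.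
  by rewrite -(phi_suml _ _ Hb) convSid (phiZl _ _ Hb).
have T3 : trilinear_map (fun u v w => phi (S u * v) (S w)).
  split; [|split] => k y z *.
  - by rewrite SL mulrDl -scalerAl (phiLl _ _ Hb).
  - by rewrite mulrDr -scalerAr (phiLl _ _ Hb).
  - by rewrite SL (phiLr _ _ Hb).
have C3 := Delta_coassoc H x T3.
rewrite !big_allpairs_dep /= in C3.
rewrite -C3.
have -> : \sum_(p <- Delta x) \sum_(q <- Delta p.1) phi (S q.1 * q.2) (S p.2)
   = phi 1 (S x).
  rewrite -[in RHS](counit_l H x) S_sum (phi_sumr _ _ Hb).
  apply: eq_bigr => p _; rewrite -(phi_suml _ _ Hb) convSid SZ.
  by rewrite (phiZl _ _ Hb) (phiZr _ _ Hb).
by rewrite addrAC.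
Qed.
End Bil3.

Lemma primS x : eps x = 0 -> prim Delta (- S x).
Proof.
move=> ex W phi Hb; rewrite !big_cons big_nil /=.
have := DeltaS _ _ Hb x; rewrite /Phi => h.
have -> : \sum_(p <- Delta (- S x)) phi p.1 p.2 = Phi _ phi (- S x) by [].
rewrite (PhiN _ _ Hb) /Phi h ex scale0r subr0 addr0 opprD.
by rewrite (phiNl _ _ Hb) (phiNr _ _ Hb).
Qed.

Lemma kersq_part x : eps x = 0 -> ker_sq eps (x - - S x).
Proof.
move=> ex.
exists [seq (-1, p.1 - eps p.1 *: 1, S p.2 - eps (S p.2) *: 1) | p <- Delta x].
split.
  move=> t /mapP [p _ ->] /=.
  by rewrite !epsD !epsN !epsZ !eps1 !subrr.
rewrite big_map /=.
rewrite (eq_bigr (fun p => - (p.1 * S p.2) + (eps p.2 *: p.1 + eps p.1 *: S p.2)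
   - (eps p.1 * eps p.2) *: 1)); last first.
  move=> p _; rewrite epsS scaleN1r mulrBl !mulrBr -!scalerAl -!scalerAr.
  rewrite !mul1r !mulr1.
  rewrite scalerA; move: (p.1 * S p.2) (eps p.2 *: p.1) (eps p.1 *: S p.2) => a b c.
  move: (_%:A) => d.
  by rewrite opprB opprB addrAC [in RHS]addrA [c + _]addrC [- a + b]addrC.
rewrite sumrB big_split sumrN big_split /= convidS ex scale0r oppr0 add0r.
rewrite -scaler_suml.
have -> : \sum_(i <- Delta x) eps i.1 * eps i.2 = eps x.
  by rewrite -{2}(counit_l H x) eps_sum; apply: eq_bigr => p _; rewrite epsZ.
rewrite ex scale0r subr0 (counit_r H) opprK.
have -> : \sum_(i <- Delta x) eps i.1 *: S i.2 = S x.
  rewrite -{2}(counit_l H x) S_sum; apply: eq_bigr => p _; by rewrite SZ.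
done.

Qed.

Lemma prim_kersq x : prim Delta x -> ker_sq eps x -> x = 0.
Proof.
move=> Hp Hk.
have h := Hp _ _ bil_Sm; rewrite convSid (prim_eps _ Hp) scale0r in h.
rewrite !big_cons big_nil /= addr0 S1 mulr1 mul1r in h.
have S0' : S x = 0.
  case: Hk => s [Hs ->]; rewrite S_sum big1_seq // => t /andP [_ /Hs [h1 h2]].
  by rewrite SZ S_mul0 // scaler0.
by move: h; rewrite S0' add0r.
Qed.

End Main.

Theorem corollary5 (K : fieldType) (A : algType K)
    (Delta : A -> tens2 A) (eps : A -> K) (S : A -> A) :
  inf_bialgebra Delta eps ->
  is_antipode Delta eps S ->
  (forall x, prim Delta x -> eps x = 0) /\
  (forall x, ker_sq eps x -> eps x = 0) /\
  (forall x, prim Delta x -> ker_sq eps x -> x = 0) /\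
  (forall x, eps x = 0 ->
     exists p q, prim Delta p /\ ker_sq eps q /\ x = p + q) /\
  (forall x, eps x = 0 -> prim Delta (- S x) /\ ker_sq eps (x - (- S x))).
Proof.
move=> H HS; split; [|split; [|split; [|split]]].
- exact: (@prim_eps _ _ _ _ H).
- exact: (@kersq_eps _ _ _ _ H).
- exact: (@prim_kersq _ _ _ _ _ H HS).
- move=> x ex; exists (- S x), (x - - S x); split.
    exact: (@primS _ _ _ _ _ H HS).
  by split; [exact: (@kersq_part _ _ _ _ _ H HS) | rewrite addrC subrK].
- move=> x ex; split; [exact: (@primS _ _ _ _ _ H HS) | exact: (@kersq_part _ _ _ _ _ H HS)].
Qed.
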